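(* Let $a,b\ge0$ be integers, $c\in\mathbb Z$ and $t\ge0$ an integer. (1) If $a+b\ge1$, then $F(a,b,c,t)=F(b,a,-c,t)$. (2) If $b\ge1$, then $F(a,b,c,t)=F(a+1,b-1,c+t,t)$. (3) If $a+b\ge1$, then $F(a+1,b,0,t)=\sum_{i=0}^tF(a,b,-i,t)$.
   Context: For integers $a,b\ge0$ with $a+b\ge1$, $c\in\mathbb Z$ and $t\ge0$, $$F(a,b,c,t)=\sum_{j=0}^{a+b}(-1)^j\binom{a+b}{j}\binom{(t+1)(b-j)+a+c-1}{a+b-1},$$ with the conventions $\binom00=1$ and $\binom NK=0$ whenever $K<0$ or $N<K$ (for any integers $N,K$). *)

(* Defs.v *)
From mathcomp Require Import all_boot all_order all_algebra.
Set Implicit Arguments. Unset Strict Implicit. Unset Printing Implicit Defensive.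
Import Order.TTheory GRing.Theory Num.Theory.
Local Open Scope ring_scope.

Definition binomZ (N K : int) : int :=
  if (0 <= K) && (K <= N) then ('C(`|N|%N, `|K|%N))%:Z else 0.

Definition F (a b : nat) (c : int) (t : nat) : int :=
  \sum_(j < (a + b).+1)
    (-1) ^+ j * ('C(a + b, j))%:Z *
    binomZ ((t.+1)%:Z * (b%:Z - j%:Z) + a%:Z + c - 1) ((a + b)%:Z - 1).

(* Main.v *)
Require Import Defs.
From mathcomp Require Import all_boot all_order all_algebra.
From mathcomp Require Import zify ring lra.
Set Implicit Arguments. Unset Strict Implicit. Unset Printing Implicit Defensive.
Import Order.TTheory GRing.Theory Num.Theory.
Local Open Scope ring_scope.

Lemma binomZ_lt (N K : int) : N < K -> binomZ N K = 0.
Proof. move=> h; rewrite /binomZ; case: ifP => // /andP[h1 h2]; lia. Qed.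

Lemma binomZ_nat (m k : nat) : binomZ m k = ('C(m, k))%:Z.
Proof.
rewrite /binomZ lez_nat le0z_nat /=; case: leqP => // h; by rewrite bin_small.
Qed.

Lemma binomZ_pascal (N : int) (k : nat) :
  binomZ N k.+1 = binomZ (N - 1) k.+1 + binomZ (N - 1) k.
Proof.
case: N => [[|m]|m].
- by rewrite binomZ_nat !binomZ_lt ?addr0 //; lia.
- rewrite (_ : Posz m.+1 - 1 = m); last by lia.
  by rewrite !binomZ_nat binS PoszD.
- by rewrite !binomZ_lt ?addr0 //; lia.
Qed.

Lemma binomZ0_diff (x : int) : binomZ x 0 - binomZ (x - 1) 0 = (x == 0)%:R.
Proof.
case: x => [[|m]|m].
- by rewrite binomZ_nat (binomZ_lt (N:=0-1)) //.
- rewrite (_ : Posz m.+1 - 1 = m); last by lia.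
  by rewrite !binomZ_nat !bin0 subrr.
- by rewrite !binomZ_lt.
Qed.

Definition Q (t k : nat) (e : int) : int :=
  \sum_(j < k.+2) (-1) ^+ j * ('C(k.+1, j))%:Z *
     binomZ (e + k%:Z - (t.+1)%:Z * j%:Z) k%:Z.

Fixpoint cf (t n : nat) (e : int) : int :=
  match n with
  | 0 => (e == 0)%:R
  | n'.+1 => \sum_(i < t.+1) cf t n' (e - i%:Z)
  end.

Lemma cfS t n e : cf t n.+1 e = \sum_(i < t.+1) cf t n (e - i%:Z).
Proof. by []. Qed.

Lemma Q_neg t k e : e < 0 -> Q t k e = 0.
Proof. move=> he; apply: big1 => j _; rewrite binomZ_lt ?mulr0 //; lia. Qed.

Lemma cf_neg t n e : e < 0 -> cf t n e = 0.
Proof.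
elim: n e => [|n IH] e he /=; first by rewrite (negbTE (ltr0_neq0 he)).
by apply: big1 => i _; apply: IH; lia.
Qed.

Lemma cf_diff t n e :
  cf t n.+1 e - cf t n.+1 (e - 1) = cf t n e - cf t n (e - (t.+1)%:Z).
Proof.
rewrite /= big_ord_recl big_ord_recr /= subr0.
rewrite (_ : \sum_(i < t) cf t n (e - (bump 0 i)%:Z) =
   \sum_(i < t) cf t n (e - 1 - (widen_ord (leqnSn t) i)%:Z)).
  rewrite (_ : e - 1 - t%:Z = e - (t.+1)%:Z); last by lia.
  by rewrite opprD addrA addrK.
apply: eq_bigr => i _; congr cf; rewrite /bump /=; lia.
Qed.

Lemma uniq_diff (f g : int -> int) :
  (forall e, e < 0 -> f e = 0) -> (forall e, e < 0 -> g e = 0) ->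
  (forall e, f e - f (e - 1) = g e - g (e - 1)) -> forall e, f e = g e.
Proof.
move=> hf hg hd e; case: e => [m|m]; last by rewrite hf ?hg.
elim: m => [|m IH].
  by have := hd 0; rewrite (hf (0-1)) ?(hg (0-1)) // !subr0.
have := hd m.+1; rewrite (_ : Posz m.+1 - 1 = m); last by lia.
by rewrite IH => h; apply: (addIr (- g m)).
Qed.

Lemma Q0_diff t e : Q t 0 e - Q t 0 (e - 1) = cf t 0 e - cf t 0 (e - (t.+1)%:Z).
Proof.
rewrite /Q !big_ord_recr !big_ord0 /= !add0r !bin1 !bin0 !expr1 !expr0 !mul1r !addr0.
rewrite !mulr0 !subr0 !mulr1 !mulN1r.
have -> : e - 1 - (t.+1)%:Z = e - (t.+1)%:Z - 1 by lia.
rewrite -!binomZ0_diff; ring.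

Qed.

Lemma sum_shift (f : nat -> int) n : f n.+1 = 0 ->
  \sum_(j < n.+1) f j = f 0%N + \sum_(i < n.+1) f i.+1.
Proof.
move=> h; rewrite big_ord_recl big_ord_recr /= h addr0; congr (_ + _).
Qed.

Lemma QS_diff t k e :
  Q t k.+1 e - Q t k.+1 (e - 1) = Q t k e - Q t k (e - (t.+1)%:Z).
Proof.
pose B (j : nat) := binomZ (e + k%:Z - (t.+1)%:Z * j%:Z) k%:Z.
have E : Q t k.+1 e = Q t k.+1 (e - 1) +
    \sum_(j < k.+3) (-1) ^+ j * ('C(k.+2, j))%:Z * B j.
  rewrite /Q -big_split; apply: eq_bigr => j _ /=; rewrite -mulrDr binomZ_pascal.
  congr (_ * (binomZ _ _ + binomZ _ _)); lia.
have E1 : Q t k e = \sum_(j < k.+2) (-1) ^+ j * ('C(k.+1, j))%:Z * B j by [].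
have E2 : Q t k (e - (t.+1)%:Z) =
    \sum_(j < k.+2) (-1) ^+ j * ('C(k.+1, j))%:Z * B j.+1.
  apply: eq_bigr => j _; congr (_ * binomZ _ _); lia.
rewrite E addrAC subrr add0r E1 E2.
rewrite (@sum_shift (fun j : nat => (-1) ^+ j * ('C(k.+2, j))%:Z * B j)); last first.
  by rewrite bin_small ?mulr0 ?mul0r.
rewrite (@sum_shift (fun j : nat => (-1) ^+ j * ('C(k.+1, j))%:Z * B j)); last first.
  by rewrite bin_small ?mulr0 ?mul0r.
rewrite /= !bin0 -addrA; congr (_ + _); rewrite -sumrB. rewrite [LHS]big_ord_recr /= bin_small // mulr0 mul0r addr0; apply: eq_bigr => i _.
rewrite binS PoszD exprS; ring.
Qed.

Lemma Q_cf t k : forall e, Q t k e = cf t k.+1 e.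
Proof.
elim: k => [|k IH]; apply: uniq_diff => e.
- exact: Q_neg.
- exact: cf_neg.
- by rewrite Q0_diff cf_diff.
- exact: Q_neg.
- exact: cf_neg.
- by rewrite QS_diff cf_diff !IH.
Qed.

Lemma cf_sym t n : forall e, cf t n e = cf t n (t%:Z * n%:Z - e).
Proof.
elim: n => [|n IH] e /=; first by rewrite mulr0 sub0r oppr_eq0.
rewrite (reindex_inj rev_ord_inj) /=; apply: eq_bigr => i _.
rewrite IH; congr cf; have := ltn_ord i; lia.
Qed.

Lemma FQ a b c t k : (a + b = k.+1)%N -> F a b c t = Q t k (c + t%:Z * b%:Z).
Proof.
move=> h; rewrite /F /Q h; apply: eq_bigr => j _.
congr (_ * binomZ _ _); lia.
Qed.

Theorem lemma4p1 (a b : nat) (c : int) (t : nat) :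
  ((1 <= a + b)%N -> F a b c t = F b a (- c) t) /\
  ((1 <= b)%N -> F a b c t = F a.+1 b.-1 (c + t%:Z) t) /\
  ((1 <= a + b)%N -> F a.+1 b 0 t = \sum_(i < t.+1) F a b (- (i%:Z)) t).
Proof.
split; [|split].
- move=> h; have [k hk] : exists k, (a + b = k.+1)%N by exists (a + b).-1; lia.
  rewrite (FQ c t hk) (@FQ b a (- c) t k); last by lia.
  rewrite !Q_cf cf_sym; congr cf; rewrite -hk PoszD mulrDr; lia.
- move=> hb; have [k hk] : exists k, (a + b = k.+1)%N by exists (a + b).-1; lia.
  rewrite (FQ c t hk) (@FQ a.+1 b.-1 (c + t%:Z) t k); last by lia.
  congr Q; rewrite (_ : Posz b = (b.-1)%:Z + 1); last by lia.
  rewrite mulrDr mulr1; lia.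
- move=> h; have [k hk] : exists k, (a + b = k.+1)%N by exists (a + b).-1; lia.
  rewrite (@FQ a.+1 b 0 t k.+1); last by lia.
  rewrite Q_cf cfS; apply: eq_bigr => i _.
  rewrite (FQ _ t hk) Q_cf; congr cf; lia.
Qed.
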